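(* Let $0<\lambda\le\Lambda$ and let $u\in C(\overline{Q_1})$ be a (viscosity) solution of $u_t-a_{ij}(x,t)u_{ij}=0$ in $Q_1$, where the measurable coefficients satisfy $\lambda I\le(a_{ij}(x,t))\le\Lambda I$ in $Q_1$. Let $A>0$ and assume that for every $t\in[-1,0]$, $$\operatorname{osc}_{x\in B_1}u(x,t)\le A.$$ Then $\operatorname{osc}_{Q_1}u\le CA$, where $C>0$ depends only on $\Lambda$ and $n$.
   Context: $\operatorname{osc}_E u=\sup_E u-\inf_E u$. $B_1$ is the unit ball of $\mathbb{R}^n$ centered at $0$, $Q_1=B_1\times(-1,0]$; $u_{ij}=\partial_{x_ix_j}u$, summation over repeated indices. *)

(* Defs.v *)
From Stdlib Require Import Reals.
Open Scope R_scope.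

(* Points of R^n are represented as functions nat -> R vanishing at
   indices >= n. *)
Definition Pt := nat -> R.

Definition in_Rn (n : nat) (x : Pt) : Prop := forall i, (n <= i)%nat -> x i = 0.

Fixpoint sumR (n : nat) (f : nat -> R) : R :=
  match n with
  | O => 0
  | S k => sumR k f + f k
  end.

Definition sqnorm (n : nat) (x : Pt) : R := sumR n (fun i => x i * x i).

Definition vsub (x y : Pt) : Pt := fun i => x i - y i.
Definition vadd_dir (x : Pt) (i : nat) (s : R) : Pt :=
  fun k => if Nat.eqb k i then x k + s else x k.

Definition inB1 (n : nat) (x : Pt) : Prop := in_Rn n x /\ sqnorm n x < 1.
Definition inB1bar (n : nat) (x : Pt) : Prop := in_Rn n x /\ sqnorm n x <= 1.

Definition inQ1 (n : nat) (x : Pt) (t : R) : Prop := inB1 n x /\ -1 < t <= 0.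
Definition inQ1bar (n : nat) (x : Pt) (t : R) : Prop := inB1bar n x /\ -1 <= t <= 0.

Definition continuous_on_Q1bar (n : nat) (u : Pt -> R -> R) : Prop :=
  forall x t, inQ1bar n x t ->
    forall eps, 0 < eps -> exists del, 0 < del /\
      forall y s, inQ1bar n y s -> sqnorm n (vsub y x) < del * del ->
        Rabs (s - t) < del -> Rabs (u y s - u x t) < eps.

(* phi is C^{2,1} on R^n x R, with partial derivatives phix i (= d/dx_i),
   phixx i j (= d/dx_j d/dx_i), phit (= d/dt); second space derivatives and
   the time derivative are (jointly) continuous. *)
Definition C21 (n : nat) (phi : Pt -> R -> R) (phix : nat -> Pt -> R -> R)
  (phixx : nat -> nat -> Pt -> R -> R) (phit : Pt -> R -> R) : Prop :=
  (forall x t, in_Rn n x -> forall i, (i < n)%nat ->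
     derivable_pt_lim (fun s => phi (vadd_dir x i s) t) 0 (phix i x t)) /\
  (forall x t, in_Rn n x -> forall i j, (i < n)%nat -> (j < n)%nat ->
     derivable_pt_lim (fun s => phix i (vadd_dir x j s) t) 0 (phixx i j x t)) /\
  (forall x t, in_Rn n x ->
     derivable_pt_lim (fun s => phi x s) t (phit x t)) /\
  (forall x t, in_Rn n x -> forall eps, 0 < eps -> exists del, 0 < del /\
     forall y s, in_Rn n y -> sqnorm n (vsub y x) < del * del -> Rabs (s - t) < del ->
       Rabs (phit y s - phit x t) < eps /\
       (forall i j, (i < n)%nat -> (j < n)%nat ->
          Rabs (phixx i j y s - phixx i j x t) < eps)).

Definition in_pnbhd (n : nat) (r : R) (x0 : Pt) (t0 : R) (y : Pt) (s : R) : Prop :=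
  inQ1 n y s /\ sqnorm n (vsub y x0) < r * r /\ t0 - r < s <= t0.

Definition Lop (n : nat) (a : nat -> nat -> Pt -> R -> R)
  (phixx : nat -> nat -> Pt -> R -> R) (phit : Pt -> R -> R) (x : Pt) (t : R) : R :=
  phit x t - sumR n (fun i => sumR n (fun j => a i j x t * phixx i j x t)).

Definition visc_sub (n : nat) (a : nat -> nat -> Pt -> R -> R) (u : Pt -> R -> R) : Prop :=
  forall phi phix phixx phit x0 t0, C21 n phi phix phixx phit -> inQ1 n x0 t0 ->
    phi x0 t0 = u x0 t0 ->
    (exists r, 0 < r /\ forall y s, in_pnbhd n r x0 t0 y s -> u y s <= phi y s) ->
    Lop n a phixx phit x0 t0 <= 0.

Definition visc_super (n : nat) (a : nat -> nat -> Pt -> R -> R) (u : Pt -> R -> R) : Prop :=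
  forall phi phix phixx phit x0 t0, C21 n phi phix phixx phit -> inQ1 n x0 t0 ->
    phi x0 t0 = u x0 t0 ->
    (exists r, 0 < r /\ forall y s, in_pnbhd n r x0 t0 y s -> phi y s <= u y s) ->
    0 <= Lop n a phixx phit x0 t0.

Definition visc_solution (n : nat) (a : nat -> nat -> Pt -> R -> R) (u : Pt -> R -> R) : Prop :=
  visc_sub n a u /\ visc_super n a u.

Definition unif_elliptic (n : nat) (lam Lam : R) (a : nat -> nat -> Pt -> R -> R) : Prop :=
  forall x t, inQ1 n x t ->
    (forall i j, a i j x t = a j i x t) /\
    (forall xi : Pt,
       lam * sqnorm n xi <= sumR n (fun i => sumR n (fun j => a i j x t * xi i * xi j)) /\
       sumR n (fun i => sumR n (fun j => a i j x t * xi i * xi j)) <= Lam * sqnorm n xi).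

Definition osc_B1_le (n : nat) (u : Pt -> R -> R) (t A : R) : Prop :=
  forall x y, inB1 n x -> inB1 n y -> u x t - u y t <= A.

Definition osc_Q1_le (n : nat) (u : Pt -> R -> R) (B : R) : Prop :=
  forall x t y s, inQ1 n x t -> inQ1 n y s -> u x t - u y s <= B.

(* Main.v *)
Require Import Defs.
From Stdlib Require Import Reals Lra Lia Psatz FunctionalExtensionality Classical.
Open Scope R_scope.
From HB Require Import structures.
From mathcomp Require all_boot all_order all_algebra all_classical all_reals all_analysis Rstruct Rstruct_topology.

Definition inbox (N : nat) (lo hi : nat -> R) (p : nat -> R) : Prop :=
  (forall i, (i < N)%nat -> lo i <= p i <= hi i) /\ (forall i, (N <= i)%nat -> p i = 0).

Module EVT.
Import all_boot all_order all_algebra all_classical all_reals all_analysis Rstruct Rstruct_topology.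
Import Order.TTheory GRing.Theory Num.Theory.
Import numFieldNormedType.Exports.
Local Open Scope classical_set_scope.
Local Open Scope ring_scope.

Lemma evt_box (N : nat) (f : 'rV[R]_N -> R) (lo hi : 'I_N -> R) :
  (forall i, Rle (lo i) (hi i)) ->
  (forall v : 'rV[R]_N, (forall i, Rle (lo i) (v ord0 i) /\ Rle (v ord0 i) (hi i)) ->
     forall eps, Rlt 0 eps -> exists d, Rlt 0 d /\
       forall w : 'rV[R]_N, (forall i, Rle (lo i) (w ord0 i) /\ Rle (w ord0 i) (hi i)) ->
         (forall i, Rlt (Rabs (w ord0 i - v ord0 i)) d) ->
         Rlt (Rabs (f w - f v)) eps) ->
  exists c : 'rV[R]_N, (forall i, Rle (lo i) (c ord0 i) /\ Rle (c ord0 i) (hi i)) /\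
    forall w : 'rV[R]_N, (forall i, Rle (lo i) (w ord0 i) /\ Rle (w ord0 i) (hi i)) ->
      Rle (f w) (f c).
Proof.
move=> lohi fc.
set A := [set v : 'rV[R]_N | forall i, `[lo i, hi i]%classic (v ord0 i)].
have AE v : A v <-> (forall i, Rle (lo i) (v ord0 i) /\ Rle (v ord0 i) (hi i)).
  rewrite /A /=; split=> H i; move: (H i); rewrite /= in_itv /=.
    by case/andP => /RleP h1 /RleP h2.
  by case=> /RleP -> /RleP ->.
have A0 : A !=set0.
  exists (\row_i lo i); apply/AE => i; rewrite mxE; split; [exact: Rle_refl|exact: lohi].
have cA : compact A by apply: (@rV_compact R N (fun i => `[lo i, hi i]%classic)) => i; exact: segment_compact.
have cf : {within A, continuous f}.
  apply/subspace_continuousP => v /AE Av.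
  rewrite /from_subspace /=. apply/(@cvgrPdist_lt _ R^o) => e e0.
  have e0' : Rlt 0 e by apply/RltP.
  have [d [d0 Hd]] := fc v Av e e0'.
  rewrite near_withinE; near=> w => /AE Aw.
  have : Rlt (Rabs (f w - f v)) e.
    apply: Hd => // i.
    have : ball v d w by near: w; apply: (nbhsx_ballx v d); apply/RltP.
    rewrite /ball /= => -[_ /(_ ord0 i)]; rewrite /ball /= => /RltP.
    by rewrite RabsE distrC.
  by move/RltP; rewrite RabsE distrC.
have [c /set_mem/AE Ac Hc] := EVT_max_rV A0 cA cf.
exists c; split => // w /AE Aw; apply/RleP; apply: Hc; exact: mem_set.
Unshelve. all: by end_near.
Qed.

Definition tof (N : nat) (v : 'rV[R]_N) (k : nat) : R :=
  match (insub k : option 'I_N) with Some j => v ord0 j | None => 0 end.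
Arguments tof {N}.

Lemma tof_lt N (v : 'rV[R]_N) k (H : (k < N)%N) : tof v k = v ord0 (Ordinal H).
Proof. by rewrite /tof insubT. Qed.

Lemma tof_ge N (v : 'rV[R]_N) k : ~~ (k < N)%N -> tof v k = 0.
Proof. by move=> H; rewrite /tof insubF //; apply: negbTE. Qed.

Lemma evt_nat' (N : nat) (g : (nat -> R) -> R) (lo hi : nat -> R) :
  (forall i, lt i N -> Rle (lo i) (hi i)) ->
  (forall p, inbox N lo hi p -> forall eps, Rlt 0 eps -> exists d, Rlt 0 d /\
     forall q, inbox N lo hi q -> (forall i, lt i N -> Rlt (Rabs (q i - p i)) d) ->
       Rlt (Rabs (g q - g p)) eps) ->
  exists c, inbox N lo hi c /\ forall q, inbox N lo hi q -> Rle (g q) (g c).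
Proof.
move=> lohi gc.
have boxE (v : 'rV[R]_N) : (forall j : 'I_N, Rle (lo j) (v ord0 j) /\ Rle (v ord0 j) (hi j)) ->
    inbox N lo hi (tof v).
  move=> Hv; split.
    move=> i /ssrnat.ltP Hi; rewrite (tof_lt _ v _ Hi); exact: (Hv (Ordinal Hi)).
  move=> i /ssrnat.leP Hi; apply: tof_ge; by rewrite -leqNgt.
have rowE (q : nat -> R) : inbox N lo hi q -> tof (\row_(j < N) q j) = q.
  move=> [_ Hq]; apply: functional_extensionality => i.
  case: (ltnP i N) => Hi.
    by rewrite (tof_lt _ _ _ Hi) mxE.
  rewrite tof_ge; last by rewrite -leqNgt.
  by rewrite Hq //; apply/ssrnat.leP.
have Hcont : forall v : 'rV[R]_N, (forall i : 'I_N, Rle (lo i) (v ord0 i) /\ Rle (v ord0 i) (hi i)) ->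
     forall eps, Rlt 0 eps -> exists d, Rlt 0 d /\
       forall w : 'rV[R]_N, (forall i : 'I_N, Rle (lo i) (w ord0 i) /\ Rle (w ord0 i) (hi i)) ->
         (forall i : 'I_N, Rlt (Rabs (w ord0 i - v ord0 i)) d) ->
         Rlt (Rabs (g (tof w) - g (tof v))) eps.
  move=> v Hv e e0; have [d [d0 Hd]] := gc (tof v) (boxE v Hv) e e0.
  exists d; split => // w Hw Hwv; apply: Hd; first exact: boxE.
  move=> i /ssrnat.ltP Hi; rewrite (tof_lt _ w _ Hi) (tof_lt _ v _ Hi); exact: Hwv.
have [c [Hc1 Hc2]] := @evt_box N (fun v => g (tof v)) (fun j => lo j) (fun j => hi j)
   (fun j => lohi j (ssrnat.ltP (ltn_ord j))) Hcont.
exists (tof c); split; first exact: boxE.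
move=> q Hq; rewrite -(rowE q Hq); apply: Hc2 => j; rewrite mxE.
by case: Hq => /(_ j (ssrnat.ltP (ltn_ord j))).
Qed.
End EVT.

Lemma evt_nat : forall (N : nat) (g : (nat -> R) -> R) (lo hi : nat -> R),
  (forall i, (i < N)%nat -> lo i <= hi i) ->
  (forall p, inbox N lo hi p -> forall eps, 0 < eps -> exists d, 0 < d /\
     forall q, inbox N lo hi q -> (forall i, (i < N)%nat -> Rabs (q i - p i) < d) ->
       Rabs (g q - g p) < eps) ->
  exists c, inbox N lo hi c /\ forall q, inbox N lo hi q -> g q <= g c.
Proof. exact EVT.evt_nat'. Qed.

From Coquelicot Require Import Coquelicot.
Open Scope R_scope.

Lemma sumR_ext n f g : (forall i, (i < n)%nat -> f i = g i) -> sumR n f = sumR n g.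
Proof. induction n; simpl; intros H; [reflexivity|]. rewrite IHn by (intros; apply H; lia). rewrite H by lia. reflexivity. Qed.

Lemma sumR_le n f g : (forall i, (i < n)%nat -> f i <= g i) -> sumR n f <= sumR n g.
Proof. induction n; simpl; intros H; [lra|]. assert (H1 := H n ltac:(lia)). assert (sumR n f <= sumR n g) by (apply IHn; intros; apply H; lia). lra. Qed.

Lemma sumR_plus n f g : sumR n (fun i => f i + g i) = sumR n f + sumR n g.
Proof. induction n; simpl; [lra|]. rewrite IHn. lra. Qed.

Lemma sumR_scal n c f : sumR n (fun i => c * f i) = c * sumR n f.
Proof. induction n; simpl; [lra|]. rewrite IHn. lra. Qed.

Lemma sumR_const n c : sumR n (fun _ => c) = INR n * c.
Proof. induction n; cbn [sumR]; [simpl; lra|]. rewrite IHn. rewrite S_INR. lra. Qed.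

Lemma sumR_delta n i c : (i < n)%nat -> sumR n (fun j => if Nat.eqb j i then c else 0) = c.
Proof.
  induction n; intros H; [lia|]. simpl.
  destruct (Nat.eq_dec i n) as [->|Hne].
  - rewrite Nat.eqb_refl. rewrite (sumR_ext n _ (fun _ => 0)).
    + rewrite sumR_const; lra.
    + intros j Hj. destruct (Nat.eqb_spec j n); [lia|reflexivity].
  - rewrite IHn by lia. destruct (Nat.eqb_spec n i); [lia|lra].
Qed.

Lemma sumR_nonneg n f : (forall i, (i < n)%nat -> 0 <= f i) -> 0 <= sumR n f.
Proof. intros H. rewrite <- (Rmult_0_r (INR n)). rewrite <- sumR_const. apply sumR_le. exact H. Qed.

Lemma sqnorm_nonneg n x : 0 <= sqnorm n x.
Proof. apply sumR_nonneg. intros; nra. Qed.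

Lemma sqnorm_term n x i : (i < n)%nat -> x i * x i <= sqnorm n x.
Proof.
  unfold sqnorm. induction n; intros H; [lia|]. simpl.
  destruct (Nat.eq_dec i n) as [->|Hne].
  - assert (0 <= sumR n (fun i0 => x i0 * x i0)) by (apply sumR_nonneg; intros; nra). lra.
  - assert (x i * x i <= sumR n (fun i0 => x i0 * x i0)) by (apply IHn; lia). nra.
Qed.

Lemma sqnorm_le n x d : (forall i, (i < n)%nat -> Rabs (x i) <= d) -> sqnorm n x <= INR n * (d * d).
Proof.
  intros H. rewrite <- sumR_const. apply sumR_le. intros i Hi. specialize (H i Hi).
  assert (0 <= Rabs (x i)) by apply Rabs_pos.
  replace (x i * x i) with (Rabs (x i) * Rabs (x i)) by (rewrite <- Rabs_mult; apply Rabs_pos_eq; nra). nra.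
Qed.

Lemma sqnorm_vadd n x i s : (i < n)%nat ->
  sqnorm n (vadd_dir x i s) = sqnorm n x + (2*s*x i + s*s).
Proof.
  intros Hi. unfold sqnorm.
  rewrite (sumR_ext n _ (fun j => x j * x j + (if Nat.eqb j i then 2*s*x i + s*s else 0))).
  - rewrite sumR_plus, sumR_delta by exact Hi. reflexivity.
  - intros j Hj. unfold vadd_dir. destruct (Nat.eqb_spec j i); [subst; ring|ring].
Qed.

Definition bphi (n : nat) (K k L : R) : Pt -> R -> R := fun x t => K + k * sqnorm n x + L * t.

Lemma C21_bphi n K k L : C21 n (bphi n K k L) (fun i x t => 2*k*x i)
  (fun i j x t => if Nat.eqb i j then 2*k else 0) (fun _ _ => L).
Proof.
  unfold C21, bphi. split; [|split; [|split]].
  - intros x t _ i Hi. apply is_derive_Reals.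
    apply (is_derive_ext (fun s => K + k * (sqnorm n x + (2*s*x i + s*s)) + L * t)).
    { intros s. rewrite sqnorm_vadd by exact Hi. reflexivity. }
    auto_derive; [exact I|ring].
  - intros x t _ i j Hi Hj. apply is_derive_Reals. unfold vadd_dir.
    destruct (Nat.eqb_spec i j).
    + apply (is_derive_ext (fun s => 2*k*(x i + s))).
      { intros s. subst. simpl. rewrite ?Nat.eqb_refl. reflexivity. }
      auto_derive; [exact I|ring].
    + apply (is_derive_ext (fun s => 2*k*x i)).
      { intros s. simpl. destruct (Nat.eqb_spec i j); [lia|reflexivity]. }
      auto_derive; [exact I|ring].
  - intros x t _. apply is_derive_Reals. auto_derive; [exact I|ring].
  - intros x t _ eps Heps. exists 1. split; [lra|]. intros y s _ _ _. split.
    + rewrite Rminus_diag, Rabs_R0. exact Heps.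
    + intros i j _ _. rewrite Rminus_diag, Rabs_R0. exact Heps.
Qed.

Lemma Lop_bphi n a k L x t :
  Lop n a (fun i j x t => if Nat.eqb i j then 2*k else 0) (fun _ _ => L) x t
  = L - sumR n (fun i => 2*k * a i i x t).
Proof.
  unfold Lop. rewrite (sumR_ext n _ (fun i => 2*k*a i i x t)); [reflexivity|]. intros i Hi.
  rewrite (sumR_ext n _ (fun j => if Nat.eqb j i then 2*k*a i i x t else 0)).
  - apply sumR_delta; exact Hi.
  - intros j Hj. destruct (Nat.eqb_spec j i), (Nat.eqb_spec i j); subst; try lia; ring.
Qed.

Lemma diag_le n lam Lam a x t : unif_elliptic n lam Lam a -> inQ1 n x t ->
  forall i, (i < n)%nat -> a i i x t <= Lam.
Proof.
  intros He Hq i Hi. destruct (He x t Hq) as [_ H].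
  set (e := fun j => if Nat.eqb j i then 1 else 0).
  destruct (H e) as [_ H2].
  assert (Hs : sqnorm n e = 1).
  { unfold sqnorm. rewrite (sumR_ext n _ (fun j => if Nat.eqb j i then 1 else 0)).
    - apply sumR_delta; exact Hi.
    - intros j _. unfold e. destruct (Nat.eqb j i); ring. }
  assert (Hq2 : sumR n (fun i0 => sumR n (fun j => a i0 j x t * e i0 * e j)) = a i i x t).
  { rewrite (sumR_ext n _ (fun i0 => if Nat.eqb i0 i then a i i x t else 0)).
    - apply sumR_delta; exact Hi.
    - intros i0 Hi0. rewrite (sumR_ext n _ (fun j => if Nat.eqb j i then a i0 i x t * e i0 else 0)).
      + rewrite sumR_delta by exact Hi. unfold e. destruct (Nat.eqb_spec i0 i); subst; ring.
      + intros j _. unfold e. destruct (Nat.eqb_spec j i); subst; ring. }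
  rewrite Hq2, Hs in H2. lra.
Qed.

Lemma Lop_bphi_pos n lam Lam a k L x t : unif_elliptic n lam Lam a -> inQ1 n x t -> 0 <= k ->
  L - 2*k*INR n*Lam <= Lop n a (fun i j x t => if Nat.eqb i j then 2*k else 0) (fun _ _ => L) x t.
Proof.
  intros He Hq Hk. rewrite Lop_bphi.
  assert (sumR n (fun i => 2*k*a i i x t) <= sumR n (fun _ => 2*k*Lam)).
  { apply sumR_le. intros i Hi. pose proof (diag_le n lam Lam a x t He Hq i Hi). nra. }
  rewrite sumR_const in H. lra.
Qed.
Lemma Rabs_le_inv a b : Rabs a <= b -> -b <= a <= b.
Proof. unfold Rabs; destruct (Rcase_abs a); lra. Qed.

Lemma sumR_abs_le n f c : (forall i, (i < n)%nat -> Rabs (f i) <= c) -> Rabs (sumR n f) <= INR n * c.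
Proof.
  intros H. rewrite <- sumR_const. apply Rabs_le. split.
  - rewrite <- (Rmult_1_l (sumR n (fun _ => c))). rewrite Ropp_mult_distr_l.
    rewrite <- sumR_scal. apply sumR_le. intros i Hi. specialize (H i Hi).
    apply Rabs_le_inv in H. lra.
  - apply sumR_le. intros i Hi. specialize (H i Hi). apply Rabs_le_inv in H. lra.
Qed.

Lemma sqnorm_diff n x y d : (forall i, (i < n)%nat -> Rabs (x i) <= 1 /\ Rabs (y i) <= 1 /\ Rabs (x i - y i) <= d) ->
  Rabs (sqnorm n x - sqnorm n y) <= INR n * (2 * d).
Proof.
  intros H. unfold sqnorm.
  replace (sumR n (fun i => x i * x i) - sumR n (fun i => y i * y i)) with
    (sumR n (fun i => x i * x i - y i * y i)).
  2:{ unfold Rminus. rewrite sumR_plus. f_equal.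
      rewrite (sumR_ext n _ (fun i => -1 * (y i * y i))) by (intros; ring).
      rewrite sumR_scal. ring. }
  apply sumR_abs_le. intros i Hi. destruct (H i Hi) as (H1 & H2 & H3).
  replace (x i * x i - y i * y i) with ((x i - y i) * (x i + y i)) by ring.
  rewrite Rabs_mult. pose proof (Rabs_triang (x i) (y i)).
  pose proof (Rabs_pos (x i - y i)). pose proof (Rabs_pos (x i + y i)). nra.
Qed.

Lemma exists_r n (f : nat -> R) : (forall i, (i < n)%nat -> 0 < f i) ->
  exists r, 0 < r /\ forall i, (i < n)%nat -> r <= f i.
Proof.
  induction n; intros H.
  - exists 1. split; [lra|]. intros; lia.
  - destruct IHn as [r [Hr Hr2]]; [intros; apply H; lia|].
    exists (Rmin r (f n)). split.
    + apply Rmin_pos; [exact Hr|apply H; lia].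
    + intros i Hi. destruct (Nat.eq_dec i n) as [->|Hne]; [apply Rmin_r|].
      eapply Rle_trans; [apply Rmin_l|]. apply Hr2; lia.
Qed.

Definition zeroP : Pt := fun _ => 0.
Definition xpart (n : nat) (p : nat -> R) : Pt := fun i => if Nat.ltb i n then p i else 0.

Lemma sqnorm_zero n : sqnorm n zeroP = 0.
Proof. unfold sqnorm, zeroP. rewrite (sumR_ext n _ (fun _ => 0)) by (intros; ring). rewrite sumR_const. ring. Qed.

Lemma zero_inB1 n : inB1 n zeroP.
Proof. split; [intros i _; reflexivity|]. rewrite sqnorm_zero. lra. Qed.

Lemma xpart_in n p : in_Rn n (xpart n p).
Proof. intros i Hi. unfold xpart. destruct (Nat.ltb_spec i n); [lia|reflexivity]. Qed.

Lemma xpart_lt n p i : (i < n)%nat -> xpart n p i = p i.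
Proof. intros Hi. unfold xpart. destruct (Nat.ltb_spec i n); [reflexivity|lia]. Qed.

Section Key.
Variables (n : nat) (lam Lam : R) (a : nat -> nat -> Pt -> R -> R) (u : Pt -> R -> R) (A : R).
Hypotheses (Hn : (1 <= n)%nat) (HLam : 0 < Lam) (He : unif_elliptic n lam Lam a)
  (Hc : continuous_on_Q1bar n u) (Hsub : visc_sub n a u) (HA : 0 < A)
  (Hosc : forall t, -1 <= t <= 0 -> osc_B1_le n u t A).

Lemma nR_ge1 : 1 <= INR n.
Proof. replace 1 with (INR 1) by reflexivity. apply le_INR. exact Hn. Qed.

Definition hh := / (2 * INR n).
Definition kk := 2 * A / (hh * hh).
Definition LL := 2 * kk * INR n * Lam + A.

Lemma hh_pos : 0 < hh.
Proof. pose proof nR_ge1. unfold hh. apply Rinv_0_lt_compat. lra. Qed.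
Lemma hh_le : hh <= /2.
Proof. pose proof nR_ge1. unfold hh. apply Rinv_le_contravar; lra. Qed.
Lemma nhh : INR n * (hh * hh) < 1.
Proof. pose proof nR_ge1. unfold hh. rewrite Rinv_mult.
  replace (INR n * (/ 2 * / INR n * (/ 2 * / INR n))) with (/4 * / INR n) by (field; lra).
  assert (/ INR n <= 1) by (rewrite <- Rinv_1; apply Rinv_le_contravar; lra). lra. Qed.
Lemma kk_pos : 0 < kk.
Proof. pose proof hh_pos. unfold kk. apply Rdiv_lt_0_compat; [lra|apply Rmult_lt_0_compat; lra]. Qed.
Lemma kk_hh : kk * (hh * hh) = 2 * A.
Proof. pose proof hh_pos. unfold kk. field. lra. Qed.
Lemma LL_pos : 0 < LL.
Proof. pose proof kk_pos. pose proof nR_ge1. unfold LL.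
  assert (0 < 2*kk*INR n*Lam). { apply Rmult_lt_0_compat; [apply Rmult_lt_0_compat; [apply Rmult_lt_0_compat|]|]; lra. } lra. Qed.

Definition lo (s : R) (i : nat) := if Nat.ltb i n then - hh else s.
Definition hi (t : R) (i : nat) := if Nat.ltb i n then hh else t.
Definition K0 (s : R) := u zeroP s + A - LL * s.
Definition gfun (s : R) (p : nat -> R) :=
  u (xpart n p) (p n) - bphi n (K0 s) kk LL (xpart n p) (p n).

Lemma box_facts s t p : inbox (S n) (lo s) (hi t) p ->
  (forall i, (i < n)%nat -> Rabs (xpart n p i) <= hh) /\ inB1 n (xpart n p) /\ s <= p n <= t.
Proof.
  intros [Hb _].
  assert (H1 : forall i, (i < n)%nat -> Rabs (xpart n p i) <= hh).
  { intros i Hi. rewrite xpart_lt by exact Hi. destruct (Hb i ltac:(lia)) as [h1 h2].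
    unfold lo, hi in *. destruct (Nat.ltb_spec i n); [|lia]. apply Rabs_le. lra. }
  split; [exact H1|]. split.
  - split; [apply xpart_in|]. eapply Rle_lt_trans; [apply sqnorm_le; exact H1|]. apply nhh.
  - destruct (Hb n ltac:(lia)) as [h1 h2]. unfold lo, hi in *.
    destruct (Nat.ltb_spec n n); [lia|]. lra.
Qed.

Lemma g_cont s t : -1 <= s -> t <= 0 -> forall p, inbox (S n) (lo s) (hi t) p ->
  forall eps, 0 < eps -> exists d, 0 < d /\
     forall q, inbox (S n) (lo s) (hi t) q -> (forall i, (i < S n)%nat -> Rabs (q i - p i) < d) ->
       Rabs (gfun s q - gfun s p) < eps.
Proof.
  intros Hs Ht p Hp eps Heps.
  destruct (box_facts s t p Hp) as (Hp1 & Hp2 & Hp3).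
  assert (HQ : inQ1bar n (xpart n p) (p n)).
  { split; [split; [apply Hp2|left; apply Hp2]|lra]. }
  destruct (Hc _ _ HQ (eps/2) ltac:(lra)) as [del [Hdel Hu]].
  pose proof nR_ge1 as Hn1. pose proof kk_pos. pose proof LL_pos. pose proof hh_le. pose proof hh_pos.
  set (M := 2*kk*INR n + LL).
  assert (HM : 0 < M) by (unfold M; assert (0 < 2*kk*INR n) by (apply Rmult_lt_0_compat; lra); lra).
  set (d := Rmin (del/(2*INR n)) (Rmin del (eps/(2*M)))).
  assert (Hd1 : d <= del/(2*INR n)) by apply Rmin_l.
  assert (Hd2 : d <= del) by (eapply Rle_trans; [apply Rmin_r|apply Rmin_l]).
  assert (Hd3 : d <= eps/(2*M)) by (eapply Rle_trans; [apply Rmin_r|apply Rmin_r]).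
  assert (Hd0 : 0 < d).
  { unfold d. apply Rmin_pos; [|apply Rmin_pos]; try lra.
    - apply Rdiv_lt_0_compat; lra.
    - apply Rdiv_lt_0_compat; lra. }
  exists d. split; [exact Hd0|]. intros q Hq Hqp.
  destruct (box_facts s t q Hq) as (Hq1 & Hq2 & Hq3).
  assert (HQq : inQ1bar n (xpart n q) (q n)).
  { split; [split; [apply Hq2|left; apply Hq2]|lra]. }
  assert (Hco : forall i, (i < n)%nat -> Rabs (xpart n q i - xpart n p i) <= d).
  { intros i Hi. rewrite !xpart_lt by exact Hi. left. apply Hqp. lia. }
  assert (Hsq : sqnorm n (vsub (xpart n q) (xpart n p)) < del * del).
  { eapply Rle_lt_trans. { apply sqnorm_le. intros i Hi. unfold vsub. apply Hco. exact Hi. }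
    assert (d * d <= (del/(2*INR n)) * (del/(2*INR n))) by (apply Rmult_le_compat; lra).
    assert (INR n * ((del/(2*INR n)) * (del/(2*INR n))) = del * del / (4 * INR n)) by (field; lra).
    assert (del * del / (4 * INR n) < del * del).
    { apply (Rmult_lt_reg_r (4 * INR n)); [lra|]. unfold Rdiv. rewrite Rmult_assoc, Rinv_l by lra.
      assert (0 < del*del) by nra. nra. }
    nra. }
  assert (Htn : Rabs (q n - p n) < del) by (eapply Rlt_le_trans; [apply Hqp; lia|lra]).
  specialize (Hu _ _ HQq Hsq Htn).
  assert (Hsd : Rabs (sqnorm n (xpart n q) - sqnorm n (xpart n p)) <= INR n * (2 * d)).
  { apply sqnorm_diff. intros i Hi. split; [|split].
    - specialize (Hq1 i Hi). lra. - specialize (Hp1 i Hi). lra. - apply Hco; exact Hi. }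
  assert (Htd : Rabs (q n - p n) < d) by (apply Hqp; lia).
  unfold gfun, bphi.
  replace (u (xpart n q) (q n) - (K0 s + kk * sqnorm n (xpart n q) + LL * q n) -
     (u (xpart n p) (p n) - (K0 s + kk * sqnorm n (xpart n p) + LL * p n)))
    with ((u (xpart n q) (q n) - u (xpart n p) (p n)) + (- kk * (sqnorm n (xpart n q) - sqnorm n (xpart n p)))
       + (- LL * (q n - p n))) by ring.
  eapply Rle_lt_trans; [apply Rabs_triang|].
  eapply Rle_lt_trans; [apply Rplus_le_compat_r; apply Rabs_triang|].
  rewrite !Rabs_mult, !Rabs_Ropp, (Rabs_pos_eq kk), (Rabs_pos_eq LL) by lra.
  assert (kk * Rabs (sqnorm n (xpart n q) - sqnorm n (xpart n p)) <= kk * (INR n * (2*d)))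
    by (apply Rmult_le_compat_l; lra).
  assert (LL * Rabs (q n - p n) <= LL * d) by (apply Rmult_le_compat_l; lra).
  assert (M * d <= eps / 2).
  { assert (HH : M * d <= M * (eps/(2*M))) by (apply Rmult_le_compat_l; lra).
    replace (M * (eps/(2*M))) with (eps/2) in HH by (field; lra). exact HH. }
  unfold M in *. nra.
Qed.

Definition embed (y : Pt) (sg : R) : nat -> R :=
  fun i => if Nat.ltb i n then y i else if Nat.eqb i n then sg else 0.

Lemma embed_n y sg : embed y sg n = sg.
Proof. unfold embed. destruct (Nat.ltb_spec n n); [lia|]. rewrite Nat.eqb_refl. reflexivity. Qed.

Lemma xpart_embed y sg : in_Rn n y -> xpart n (embed y sg) = y.
Proof.
  intros Hy. apply functional_extensionality. intros i. unfold xpart, embed.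
  destruct (Nat.ltb_spec i n); [reflexivity|]. symmetry. apply Hy. lia.
Qed.

Lemma embed_box s t y sg : in_Rn n y -> (forall i, (i < n)%nat -> Rabs (y i) <= hh) -> s <= sg <= t ->
  inbox (S n) (lo s) (hi t) (embed y sg).
Proof.
  intros Hy Hb Hsg. split.
  - intros i Hi. unfold embed, lo, hi. destruct (Nat.ltb_spec i n).
    + apply Rabs_le_inv. apply Hb; exact H.
    + destruct (Nat.eqb_spec i n); [exact Hsg|lia].
  - intros i Hi. unfold embed. destruct (Nat.ltb_spec i n); [lia|].
    destruct (Nat.eqb_spec i n); [lia|reflexivity].
Qed.

Lemma gfun_embed s y sg : in_Rn n y ->
  gfun s (embed y sg) = u y sg - bphi n (K0 s) kk LL y sg.
Proof. intros Hy. unfold gfun. rewrite xpart_embed by exact Hy. rewrite embed_n. reflexivity. Qed.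

Lemma sq_lt_abs (x r : R) : 0 < r -> x * x < r * r -> Rabs x < r.
Proof. intros Hr H. unfold Rabs. destruct (Rcase_abs x); nra. Qed.

Lemma abs_sq x : Rabs x * Rabs x = x * x.
Proof. unfold Rabs. destruct (Rcase_abs x); ring. Qed.

Lemma key s t : -1 <= s -> s <= t -> t <= 0 -> u zeroP t <= u zeroP s + A + LL.
Proof.
  intros Hs Hst Ht.
  pose proof hh_pos as Hh. pose proof kk_pos as Hk. pose proof LL_pos as HL. pose proof nR_ge1 as Hn1.
  destruct (evt_nat (S n) (gfun s) (lo s) (hi t)) as [c [Hcb Hmax]].
  { intros i Hi. unfold lo, hi. destruct (Nat.ltb i n); lra. }
  { apply g_cont; lra. }
  destruct (box_facts s t c Hcb) as (Hc1 & Hc2 & Hc3).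
  assert (Hz : in_Rn n zeroP) by (intros i _; reflexivity).
  assert (Hzb : forall i, (i < n)%nat -> Rabs (zeroP i) <= hh).
  { intros. unfold zeroP. rewrite Rabs_R0. lra. }
  assert (Hint : forall i, (i < n)%nat -> Rabs (xpart n c i) < hh).
  { intros i Hi. destruct (Rle_lt_or_eq_dec _ _ (Hc1 i Hi)) as [Hlt|Heq]; [exact Hlt|exfalso].
    pose proof (Hmax (embed zeroP (c n)) (embed_box s t zeroP (c n) Hz Hzb Hc3)) as Hm.
    rewrite gfun_embed in Hm by exact Hz.
    unfold gfun, bphi in Hm. rewrite sqnorm_zero in Hm.
    assert (Hos : u (xpart n c) (c n) - u zeroP (c n) <= A).
    { apply (Hosc (c n)); [lra|exact Hc2|apply zero_inB1]. }
    assert (Hsq : hh * hh <= sqnorm n (xpart n c)).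
    { rewrite <- Heq, abs_sq. apply sqnorm_term; exact Hi. }
    assert (kk * (hh * hh) <= kk * sqnorm n (xpart n c)) by (apply Rmult_le_compat_l; lra).
    rewrite kk_hh in H. lra. }
  assert (Hcn : c n = s).
  { destruct (Rle_lt_or_eq_dec _ _ (proj1 Hc3)) as [Hlt|Heq]; [exfalso|symmetry; exact Heq].
    destruct (exists_r (S n) (fun i => if Nat.ltb i n then hh - Rabs (xpart n c i) else c n - s))
      as [r [Hr Hr2]].
    { intros i Hi. destruct (Nat.ltb_spec i n).
      - specialize (Hint i H). lra.
      - lra. }
    assert (Hq : inQ1 n (xpart n c) (c n)) by (split; [exact Hc2|lra]).
    pose proof (Hsub (bphi n (K0 s + gfun s c) kk LL) (fun i x t => 2*kk*x i)
      (fun i j x t => if Nat.eqb i j then 2*kk else 0) (fun _ _ => LL) (xpart n c) (c n)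
      (C21_bphi n _ kk LL) Hq) as HV.
    assert (HLop := Lop_bphi_pos n lam Lam a kk LL (xpart n c) (c n) He Hq ltac:(lra)).
    assert (LL - 2 * kk * INR n * Lam = A) by (unfold LL; ring).
    assert (Lop n a (fun i j _ _ => if Nat.eqb i j then 2 * kk else 0) (fun _ _ => LL) (xpart n c) (c n) <= 0).
    2:{ lra. }
    apply HV.
    - unfold gfun, bphi. ring.
    - exists r. split; [exact Hr|]. intros y sg (Hyq & Hyd & Hyt).
      assert (Hy : in_Rn n y) by apply Hyq.
      assert (Hyb : forall i, (i < n)%nat -> Rabs (y i) <= hh).
      { intros i Hi. assert (Hd : Rabs (y i - xpart n c i) < r).
        { apply sq_lt_abs; [exact Hr|]. eapply Rle_lt_trans; [|exact Hyd].
          apply (sqnorm_term n (vsub y (xpart n c)) i Hi). }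
        pose proof (Hr2 i ltac:(lia)) as Hri. destruct (Nat.ltb_spec i n); [|lia].
        replace (y i) with (xpart n c i + (y i - xpart n c i)) by ring.
        pose proof (Rabs_triang (xpart n c i) (y i - xpart n c i)). lra. }
      assert (Hrn := Hr2 n ltac:(lia)). destruct (Nat.ltb_spec n n); [lia|].
      pose proof (Hmax (embed y sg) (embed_box s t y sg Hy Hyb ltac:(lra))) as Hm.
      rewrite gfun_embed in Hm by exact Hy. unfold bphi in *. lra. }
  assert (Hg : gfun s c <= 0).
  { unfold gfun, bphi, K0. rewrite Hcn.
    assert (Hos : u (xpart n c) s - u zeroP s <= A).
    { apply (Hosc s); [lra|exact Hc2|apply zero_inB1]. }
    pose proof (sqnorm_nonneg n (xpart n c)).
    assert (0 <= kk * sqnorm n (xpart n c)) by (apply Rmult_le_pos; lra). lra. }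
  pose proof (Hmax (embed zeroP t) (embed_box s t zeroP t Hz Hzb ltac:(lra))) as Hm.
  rewrite gfun_embed in Hm by exact Hz. unfold bphi, K0 in Hm. rewrite sqnorm_zero in Hm.
  assert (LL * (t - s) <= LL * 1) by (apply Rmult_le_compat_l; lra). lra.
Qed.

End Key.


Lemma C21_neg n phi phix phixx phit : C21 n phi phix phixx phit ->
  C21 n (fun x t => - phi x t) (fun i x t => - phix i x t) (fun i j x t => - phixx i j x t) (fun x t => - phit x t).
Proof.
  intros (H1 & H2 & H3 & H4). split; [|split; [|split]].
  - intros x t Hx i Hi. apply is_derive_Reals. apply (is_derive_opp (fun s => phi (vadd_dir x i s) t)).
    apply is_derive_Reals. apply H1; assumption.
  - intros x t Hx i j Hi Hj. apply is_derive_Reals. apply (is_derive_opp (fun s => phix i (vadd_dir x j s) t)).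
    apply is_derive_Reals. apply H2; assumption.
  - intros x t Hx. apply is_derive_Reals. apply (is_derive_opp (fun s => phi x s)).
    apply is_derive_Reals. apply H3; assumption.
  - intros x t Hx eps Heps. destruct (H4 x t Hx eps Heps) as [d [Hd Hd2]].
    exists d. split; [exact Hd|]. intros y s Hy Hs1 Hs2. destruct (Hd2 y s Hy Hs1 Hs2) as [A1 A2].
    split.
    + replace (- phit y s - - phit x t) with (- (phit y s - phit x t)) by ring. rewrite Rabs_Ropp. exact A1.
    + intros i j Hi Hj. replace (- phixx i j y s - - phixx i j x t) with (- (phixx i j y s - phixx i j x t)) by ring.
      rewrite Rabs_Ropp. apply A2; assumption.
Qed.

Lemma Lop_neg n a phixx phit x t :
  Lop n a (fun i j x t => - phixx i j x t) (fun x t => - phit x t) x t = - Lop n a phixx phit x t.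
Proof.
  unfold Lop.
  rewrite (sumR_ext n _ (fun i => -1 * sumR n (fun j => a i j x t * phixx i j x t))).
  - rewrite sumR_scal. ring.
  - intros i _. rewrite <- sumR_scal. apply sumR_ext. intros; ring.
Qed.

Lemma sub_neg n a u : visc_super n a u -> visc_sub n a (fun x t => - u x t).
Proof.
  intros Hs phi phix phixx phit x0 t0 HC Hq Heq [r [Hr Ht]].
  assert (0 <= Lop n a (fun i j x t => - phixx i j x t) (fun x t => - phit x t) x0 t0).
  { apply (Hs (fun x t => - phi x t) (fun i x t => - phix i x t)); [apply C21_neg; exact HC|exact Hq| |].
    - rewrite Heq. ring.
    - exists r. split; [exact Hr|]. intros y s Hys. specialize (Ht y s Hys). lra. }
  rewrite Lop_neg in H. lra.
Qed.

Lemma cont_neg n u : continuous_on_Q1bar n u -> continuous_on_Q1bar n (fun x t => - u x t).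
Proof.
  intros Hc x t Hx eps Heps. destruct (Hc x t Hx eps Heps) as [d [Hd Hd2]].
  exists d. split; [exact Hd|]. intros y s Hy H1 H2.
  replace (- u y s - - u x t) with (- (u y s - u x t)) by ring. rewrite Rabs_Ropp. apply Hd2; assumption.
Qed.

Theorem lemma4p3 :
  forall (n : nat) (Lam : R), (1 <= n)%nat -> 0 < Lam ->
  exists C : R, 0 < C /\
    forall (lam : R) (a : nat -> nat -> Pt -> R -> R) (u : Pt -> R -> R) (A : R),
      0 < lam -> lam <= Lam ->
      unif_elliptic n lam Lam a ->
      continuous_on_Q1bar n u ->
      visc_solution n a u ->
      0 < A ->
      (forall t, -1 <= t <= 0 -> osc_B1_le n u t A) ->
      osc_Q1_le n u (C * A).
Proof.
  intros n Lam Hn HLam.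
  pose proof (hh_pos n Hn) as Hh.
  exists (4 + 2 * (2 / (hh n * hh n)) * INR n * Lam). split.
  { assert (0 < 2 / (hh n * hh n)) by (apply Rdiv_lt_0_compat; [lra|apply Rmult_lt_0_compat; lra]).
    assert (0 < INR n) by (apply lt_0_INR; lia).
    assert (0 < 2 * (2 / (hh n * hh n)) * INR n * Lam)
      by (apply Rmult_lt_0_compat; [apply Rmult_lt_0_compat; [apply Rmult_lt_0_compat|]|]; lra).
    lra. }
  intros lam a u A Hlam HlL He Hc [Hsub Hsup] HA Hosc.
  assert (Hosc' : forall t, -1 <= t <= 0 -> osc_B1_le n (fun x t => - u x t) t A).
  { intros t Ht x y Hx Hy. specialize (Hosc t Ht y x Hy Hx). lra. }
  assert (K1 := key n lam Lam a u A Hn HLam He Hc Hsub HA Hosc).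
  assert (K2 := key n lam Lam a (fun x t => - u x t) A Hn HLam He (cont_neg n u Hc) (sub_neg n a u Hsup) HA Hosc').
  assert (Hd : forall s t, -1 <= s <= 0 -> -1 <= t <= 0 -> u zeroP t - u zeroP s <= A + LL n Lam A).
  { intros s t Hs Ht. destruct (Rle_dec s t).
    - specialize (K1 s t ltac:(lra) r ltac:(lra)). lra.
    - specialize (K2 t s ltac:(lra) ltac:(lra) ltac:(lra)). simpl in K2. lra. }
  intros x t y s Hx Hy.
  assert (H1 : u x t - u zeroP t <= A) by (apply Hosc; [destruct Hx as [_ Ht]; lra|apply Hx|apply zero_inB1]).
  assert (H2 : u zeroP s - u y s <= A) by (apply Hosc; [destruct Hy as [_ Ht]; lra|apply zero_inB1|apply Hy]).
  assert (H3 := Hd s t ltac:(destruct Hy as [_ Ht]; lra) ltac:(destruct Hx as [_ Ht]; lra)).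
  assert (HLL : LL n Lam A = 2 * (2 / (hh n * hh n)) * INR n * Lam * A + A).
  { unfold LL, kk. field. lra. }
  rewrite HLL in H3. lra.
Qed.
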